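(* In the setting below, for every probability measure $\mathbb{Q}$ on $\mathcal{F}$, $$\inf_{D}L_D(D,\mathbb{Q}) = a-\tfrac{a}{2}\,\big\|\mathbb{P}^+-\big(\gamma\mathbb{Q}+(1-\gamma)\mathbb{P}^-\big)\big\|_{TV},$$ the infimum being over measurable $D:\mathcal{F}\to[0,+\infty)$ and being attained by some $D$ with values in $[0,a]$. Moreover $\big\|\mathbb{P}^+-(\gamma\mathbb{Q}+(1-\gamma)\mathbb{P}^-)\big\|_{TV}\ge 2(1-\gamma)$ for every $\mathbb{Q}$, with equality when $\mathbb{Q}=\mathbb{P}^+$.
   Context: $(\mathcal{F},\Sigma)$ is a measurable space, $\mathbb{P}^+,\mathbb{P}^-$ are mutually singular probability measures on it (there is a measurable $S$ with $\mathbb{P}^+(S)=1$, $\mathbb{P}^-(S)=0$), $a>0$, $\gamma\in(0,1]$, and for measurable $D:\mathcal{F}\to[0,\infty)$ and probability measure $\mathbb{Q}$, $L_D(D,\mathbb{Q})=\mathbb{E}_{\mathbb{P}^+}D+\gamma\,\mathbb{E}_{\mathbb{Q}}\max(0,a-D)+(1-\gamma)\,\mathbb{E}_{\mathbb{P}^-}\max(0,a-D)$. For probability measures $\mathbb{P}_1,\mathbb{P}_2$, $\|\mathbb{P}_1-\mathbb{P}_2\|_{TV}$ is the total variation norm $|\mu|(\mathcal{F})$ of $\mu=\mathbb{P}_1-\mathbb{P}_2$ (equivalently $\int|p_1-p_2|\,d\nu$). *)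

(* Defs.v *)
From HB Require Import structures.
From mathcomp Require Import all_boot all_order all_algebra.
From mathcomp Require Import all_classical all_reals all_analysis.
Set Implicit Arguments. Unset Strict Implicit. Unset Printing Implicit Defensive.
Import Order.TTheory GRing.Theory Num.Theory.
Local Open Scope classical_set_scope.
Local Open Scope ring_scope.
Local Open Scope ereal_scope.

Section Defs.
Context {d : measure_display} {T : measurableType d} {R : realType}.

Definition tv_norm (mu nu : set T -> \bar R) : \bar R :=
  ereal_sup [set s | exists (n : nat) (A : nat -> set T),
    [/\ (forall i, measurable (A i)),
        trivIset `I_n A,
        \bigcup_(i in `I_n) A i = setT &
        s = \sum_(i < n) `| mu (A i) - nu (A i) | ]].

Definition mixture (g : R) (Q Pm : set T -> \bar R) : set T -> \bar R :=
  fun A => (g%:E * Q A + (1 - g)%:E * Pm A).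

Definition lossD (Pp Pm Q : probability T R) (a g : R) (D : T -> R) : \bar R :=
  \int[Pp]_x (D x)%:E
  + g%:E * \int[Q]_x (Num.max 0 (a - D x))%:E
  + (1 - g)%:E * \int[Pm]_x (Num.max 0 (a - D x))%:E.

End Defs.

(* Main.v *)
Require Import Defs.
From HB Require Import structures.
From mathcomp Require Import all_boot all_order all_algebra.
From mathcomp Require Import all_classical all_reals all_analysis.
From mathcomp Require Import measurable_realfun ring lra.
Set Implicit Arguments. Unset Strict Implicit. Unset Printing Implicit Defensive.
Import Order.TTheory GRing.Theory Num.Theory.
Local Open Scope classical_set_scope.
Local Open Scope ring_scope.
Local Open Scope ereal_scope.

Section TV.
Context d (T : measurableType d) (R : realType).
Implicit Types mu nu : set T -> \bar R.

Lemma tv_lb mu nu (A : set T) : measurable A ->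
  `|mu A - nu A| + `|mu (~` A) - nu (~` A)| <= tv_norm mu nu.
Proof.
move=> mA; apply: ereal_sup_ubound.
exists 2%N, (fun i => if i == 0%N then A else ~` A); split.
- by move=> i; case: ifP => _ //; exact: measurableC.
- apply/trivIsetP => i j; move=> /= ilt jlt ij.
  move: i j ilt jlt ij => [|[|i]] [|[|j]] //= _ _ _.
  + by rewrite setICr.
  + by rewrite setICl.
- rewrite predeqE => x; split => // _.
  have [Ax|nAx] := pselect (A x).
  + by exists 0%N => //=.
  + by exists 1%N => //=.
- by rewrite big_ord_recr /= big_ord_recr /= big_ord0 add0e.
Qed.

Lemma tv_ub mu nu (c : \bar R) :
  (forall n (A : nat -> set T), (forall i, measurable (A i)) -> trivIset `I_n A ->
     \bigcup_(i in `I_n) A i = setT -> \sum_(i < n) `|mu (A i) - nu (A i)| <= c) ->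
  tv_norm mu nu <= c.
Proof.
move=> H; apply: ge_ereal_sup => _ [n [A [mA tA UA ->]]]; exact: H.
Qed.

Lemma part_sum (m : {measure set T -> \bar R}) n (A : nat -> set T) (B : set T) :
  (forall i, measurable (A i)) -> trivIset `I_n A ->
  \bigcup_(i in `I_n) A i = setT -> measurable B ->
  \sum_(i < n) m (A i `&` B) = m B.
Proof.
move=> mA tA UA mB.
rewrite -(@measure_semi_additive_ord_I _ _ _ m (fun i => A i `&` B)).
- by rewrite -(bigcup_mkord n (fun i => A i `&` B)) -setI_bigcupl UA setTI.
- by move=> k _; exact: measurableI.
- exact: trivIset_setIr.
- by rewrite -(bigcup_mkord n (fun i => A i `&` B)) -setI_bigcupl UA setTI.
Qed.
End TV.

Section Aux.
Context d (T : measurableType d) (R : realType).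

Lemma probE (m : probability T R) A : measurable A -> m A = (fine (m A))%:E.
Proof. by move=> mA; rewrite fineK// fin_num_measure. Qed.

Lemma prob_ge0 (m : probability T R) A : measurable A -> (0 <= fine (m A))%R.
Proof. by move=> mA; rewrite fine_ge0// measure_ge0. Qed.

Lemma prob_le1 (m : probability T R) A : measurable A -> (fine (m A) <= 1)%R.
Proof. by move=> mA; rewrite -lee_fin -probE// probability_le1. Qed.

Lemma probC (m : probability T R) A : measurable A -> fine (m (~` A)) = (1 - fine (m A))%R.
Proof. by move=> mA; rewrite probability_setC// {1}probE// -EFinB. Qed.

Lemma part_sumR (m : probability T R) n (A : nat -> set T) (B : set T) :
  (forall i, measurable (A i)) -> trivIset `I_n A ->
  \bigcup_(i in `I_n) A i = setT -> measurable B ->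
  (\sum_(i < n) fine (m (A i `&` B)) = fine (m B))%R.
Proof.
move=> mA tA UA mB; apply: EFin_inj; rewrite -sumEFin -probE//.
rewrite -(@part_sum _ _ _ m _ _ _ mA tA UA mB); apply: eq_bigr => i _.
by rewrite -probE//; exact: measurableI.
Qed.

Lemma mixE (g : R) (Q Pm : probability T R) A : measurable A ->
  mixture g Q Pm A = (g * fine (Q A) + (1 - g) * fine (Pm A))%:E.
Proof. by move=> mA; rewrite /mixture (probE Q) // (probE Pm)// -!EFinM -EFinD. Qed.

Lemma tv_part2 (g : R) (Pp Pm Q : probability T R) :
  (exists S : set T, [/\ measurable S, Pp S = 1%E & Pm S = 0%E]) ->
  (0 < g)%R -> (g <= 1)%R ->
  ((2 * (1 - g))%:E <= tv_norm Pp (mixture g Q Pm))%E.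
Proof.
move=> [S [mS PS PmS]] g0 g1; apply: le_trans (tv_lb Pp (mixture g Q Pm) mS).
have mCS : measurable (~` S) by exact: measurableC.
rewrite !mixE// (probE Pp mS) (probE Pp mCS) (probE Pm mS) (probE Pm mCS).
rewrite !probC// PS PmS /= -EFinD lee_fin.
have q0 := prob_ge0 Q mS; have q1 := prob_le1 Q mS.
set q := fine (Q S).
have h1 := ler_norm (1 - (g * q + (1 - g) * 0))%R.
have h2 := ler_norm (- (1 - 1 - (g * (1 - q) + (1 - g) * (1 - 0))))%R.
rewrite normrN in h2.
have : (0 <= g * q <= g)%R.
  by apply/andP; split; [rewrite mulr_ge0// ltW|rewrite ler_piMr// ltW].
move=> /andP[gq0 gq1].
lra.
Qed.

Lemma part_sum1 (m : probability T R) n (A : nat -> set T) :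
  (forall i, measurable (A i)) -> trivIset `I_n A ->
  \bigcup_(i in `I_n) A i = setT ->
  (\sum_(i < n) fine (m (A i)) = 1)%R.
Proof.
move=> mA tA UA; have := part_sumR m mA tA UA measurableT.
by under eq_bigr do rewrite setIT; rewrite probability_setT.
Qed.

Lemma tv_part3 (g : R) (Pp Pm : probability T R) : (g <= 1)%R ->
  (tv_norm Pp (mixture g Pp Pm) <= (2 * (1 - g))%:E)%E.
Proof.
move=> g1; apply: tv_ub => n A mA tA UA.
under eq_bigr => i _.
  rewrite mixE// (probE Pp (mA i)) -EFinB abse_EFin.
  over.
rewrite sumEFin lee_fin.
apply: (@le_trans _ _ (\sum_(i < n) (1 - g) * (fine (Pp (A i)) + fine (Pm (A i))))%R).
  apply: ler_sum => i _.
  have p0 := prob_ge0 Pp (mA i); have m0 := prob_ge0 Pm (mA i).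
  rewrite (_ : (_ - _ = (1 - g) * (fine (Pp (A i)) - fine (Pm (A i))))%R); last first.
    by rewrite mulrBr mulrBl mul1r; lra.
  rewrite normrM ger0_norm ?subr_ge0//; apply: ler_wpM2l; first by rewrite subr_ge0.
  rewrite ler_norml; apply/andP; split; lra.
rewrite -mulr_sumr big_split /= !part_sum1//; lra.
Qed.

End Aux.

Section Integ.
Context d (T : measurableType d) (R : realType).

Lemma int_cmp (m1 m2 : {measure set T -> \bar R}) (B : set T) (f : T -> \bar R) :
  measurable B ->
  (forall A, measurable A -> A `<=` B -> m1 A <= m2 A) ->
  (forall x, 0 <= f x) -> measurable_fun setT f ->
  \int[m1]_(x in B) f x <= \int[m2]_(x in B) f x.
Proof.
move=> mB H f0 mf.
rewrite (@eq_measure_integral _ _ _ B (mrestr m1 mB)); last first.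
  by move=> A mA AB; change (m1 A = m1 (A `&` B)); rewrite setIidl.
rewrite [leRHS](@eq_measure_integral _ _ _ B (mrestr m2 mB)); last first.
  by move=> A mA AB; change (m2 A = m2 (A `&` B)); rewrite setIidl.
apply: ge0_le_measure_integral => // S mS; change (m1 (S `&` B) <= m2 (S `&` B)).
apply: H; [exact: measurableI | exact: subIsetr].
Qed.

Lemma int_split (mu : {measure set T -> \bar R}) (P N : set T) (f : T -> \bar R) :
  measurable P -> measurable N -> P `|` N = setT -> P `&` N = set0 ->
  measurable_fun setT f ->
  \int[mu]_x f x = \int[mu]_(x in P) f x + \int[mu]_(x in N) f x.
Proof.
move=> mP mN PUN PIN mf.
rewrite -integral_setU ?PUN //.
by rewrite /disj_set PIN eqxx.
Qed.

End Integ.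

Section Main.
Context d (T : measurableType d) (R : realType) (Pp Pm Q : probability T R) (a g : R).
Context (Ha : (0 < a)%R) (Hg0 : (0 < g)%R) (Hg1 : (g <= 1)%R).

Let g_ge0 : (0 <= g)%R. Proof. exact: ltW. Qed.
Let g1_ge0 : (0 <= 1 - g)%R. Proof. by rewrite subr_ge0. Qed.

Definition Mx :=
  measure_add (mscale (NngNum g_ge0) Q) (mscale (NngNum g1_ge0) Pm).

Definition MR (A : set T) : R := (g * fine (Q A) + (1 - g) * fine (Pm A))%R.

Lemma MxE A : Mx A = mixture g Q Pm A.
Proof. exact: (measure_addE _ _ A). Qed.

Lemma MxR A : measurable A -> Mx A = (MR A)%:E.
Proof. by move=> mA; rewrite MxE mixE. Qed.

Definition nuc := cadd (charge_of_finite_measure Pp)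
  (cadd (cscale (-g) (charge_of_finite_measure Q))
        (cscale (g - 1) (charge_of_finite_measure Pm))).

Lemma nucE A : measurable A -> nuc A = (fine (Pp A) - MR A)%:E.
Proof.
move=> mA; rewrite /nuc /= /cadd /cscale /=.
change (Pp A + ((- g)%:E * Q A + (g - 1)%:E * Pm A) = (fine (Pp A) - MR A)%:E).
rewrite (probE Pp mA) (probE Q mA) (probE Pm mA) /MR.
rewrite -!EFinM -!EFinD; congr (_%:E); lra.
Qed.

Lemma MR_ge0 A : measurable A -> (0 <= MR A)%R.
Proof.
move=> mA; rewrite /MR addr_ge0// mulr_ge0//; exact: prob_ge0.
Qed.

Lemma MRC A : measurable A -> MR (~` A) = (1 - MR A)%R.
Proof. by move=> mA; rewrite /MR !probC//; lra. Qed.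

Lemma MR_sum n (A : nat -> set T) (B : set T) :
  (forall i, measurable (A i)) -> trivIset `I_n A ->
  \bigcup_(i in `I_n) A i = setT -> measurable B ->
  (\sum_(i < n) MR (A i `&` B) = MR B)%R.
Proof.
move=> mA tA UA mB; rewrite /MR big_split /= -!mulr_sumr.
by rewrite !part_sumR.
Qed.

Lemma intMx (h : T -> \bar R) : measurable_fun setT h -> (forall x, 0 <= h x) ->
  \int[Mx]_x h x = g%:E * \int[Q]_x h x + (1 - g)%:E * \int[Pm]_x h x.
Proof.
move=> mh h0; rewrite /Mx ge0_integral_measure_add//.
by rewrite !ge0_integral_mscale.
Qed.


Section HahnPart.
Variables (P N : set T).
Hypothesis hPN : hahn_decomposition nuc P N.

Let mP : measurable P. Proof. by case: hPN => -[]. Qed.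
Let mN : measurable N. Proof. by case: hPN => _ []. Qed.
Let PUN : P `|` N = setT. Proof. by case: hPN. Qed.
Let PIN : P `&` N = set0. Proof. by case: hPN. Qed.

Lemma NC : ~` P = N.
Proof.
rewrite predeqE => x; split => [nPx|Nx Px].
- have : (P `|` N) x by rewrite PUN.
  by case.
- by have : (P `&` N) x by []; rewrite PIN.
Qed.

Lemma decomp (m : probability T R) A : measurable A ->
  fine (m A) = (fine (m (A `&` P)) + fine (m (A `&` N)))%R.
Proof.
move=> mA; apply: EFin_inj; rewrite EFinD -!probE//; try exact: measurableI.
rewrite -measureU; try exact: measurableI.
  by rewrite -setIUr PUN setIT.
by rewrite setIACA setIid PIN setI0.
Qed.

Lemma decompMR A : measurable A -> MR A = (MR (A `&` P) + MR (A `&` N))%R.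
Proof. by move=> mA; rewrite /MR (decomp Q mA) (decomp Pm mA); lra. Qed.

Lemma HP A : measurable A -> (MR (A `&` P) <= fine (Pp (A `&` P)))%R.
Proof.
move=> mA; case: hPN => -[_ pos] _ _ _.
have h := pos (A `&` P) (measurableI _ _ mA mP) (@subIsetr _ _ _).
have e := nucE (measurableI _ _ mA mP).
have : (0%R <= (fine (Pp (A `&` P)) - MR (A `&` P))%:E)%E by rewrite -e; exact: h.
by rewrite lee_fin subr_ge0.
Qed.

Lemma HN A : measurable A -> (fine (Pp (A `&` N)) <= MR (A `&` N))%R.
Proof.
move=> mA; case: hPN => _ [_ neg] _ _.
have h := neg (A `&` N) (measurableI _ _ mA mN) (@subIsetr _ _ _).
have e := nucE (measurableI _ _ mA mN).
have : ((fine (Pp (A `&` N)) - MR (A `&` N))%:E <= 0%R)%E by rewrite -e; exact: h.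
by rewrite lee_fin subr_le0.
Qed.

Lemma tv_formula : tv_norm Pp (mixture g Q Pm) = (2 * (fine (Pp P) - MR P))%:E.
Proof.
have hP := HP measurableT; rewrite setTI in hP.
have pN : fine (Pp N) = (1 - fine (Pp P))%R by rewrite -NC probC.
have MN : MR N = (1 - MR P)%R by rewrite -NC MRC.
apply/le_anti/andP; split.
- apply: tv_ub => n A mA tA UA.
  under eq_bigr => i _.
    rewrite mixE// (probE Pp (mA i)) -EFinB abse_EFin.
    over.
  rewrite sumEFin lee_fin.
  apply: (@le_trans _ _ (\sum_(i < n) ((fine (Pp (A i `&` P)) - MR (A i `&` P))
             + (MR (A i `&` N) - fine (Pp (A i `&` N)))))%R).
    apply: ler_sum => i _.
    have h1 := HP (mA i); have h2 := HN (mA i).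
    rewrite -/(MR (A i)) (decomp Pp (mA i)) (decompMR (mA i)).
    rewrite ler_norml; apply/andP; split; lra.
  rewrite big_split /= !sumrB !part_sumR// !MR_sum//; lra.
- apply: le_trans (tv_lb Pp (mixture g Q Pm) mP).
  rewrite NC !mixE// (probE Pp mP) (probE Pp mN) -!EFinB !abse_EFin -EFinD lee_fin.
  rewrite -!/(MR _).
  have h1 := ler_norm (fine (Pp P) - MR P)%R.
  have h2 := ler_norm (- (fine (Pp N) - MR N))%R.
  rewrite normrN in h2.
  lra.
Qed.

Lemma loss_lb (D : T -> R) : measurable_fun setT D -> (forall x, (0 <= D x)%R) ->
  ((a * (fine (Pp N) + MR P))%:E <= lossD Pp Pm Q a g D)%E.
Proof.
move=> mD D0.
have mf : measurable_fun setT (fun x => (D x)%:E) by exact/measurable_EFinP.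
have mh : measurable_fun setT (fun x => (Num.max 0 (a - D x))%:E).
  apply/measurable_EFinP; apply: measurable_maxr => //.
  by apply: measurable_funB.
have f0 : forall x, (0%R <= (D x)%:E)%E by move=> x; rewrite lee_fin.
have h0 : forall x, (0%R <= (Num.max 0 (a - D x))%:E)%E.
  by move=> x; rewrite lee_fin le_max lexx.
rewrite /lossD -addeA -intMx//.
rewrite (int_split Pp mP mN PUN PIN mf) (int_split Mx mP mN PUN PIN mh).
have c1 : (\int[Mx]_(x in P) (D x)%:E <= \int[Pp]_(x in P) (D x)%:E)%E.
  apply: int_cmp => // A mA AP.
  apply: (@le_trans _ _ ((MR A)%:E)); first by rewrite -(MxR mA); exact: lexx.
  apply: (@le_trans _ _ ((fine (Pp A))%:E)); last by rewrite -(probE Pp mA); exact: lexx.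
  rewrite lee_fin.
  by have := HP mA; rewrite setIidl.
have c2 : (\int[Pp]_(x in N) (Num.max 0 (a - D x))%:E
           <= \int[Mx]_(x in N) (Num.max 0 (a - D x))%:E)%E.
  apply: int_cmp => // A mA AN.
  apply: (@le_trans _ _ ((MR A)%:E)); last by rewrite -(MxR mA); exact: lexx.
  apply: (@le_trans _ _ ((fine (Pp A))%:E)); first by rewrite -(probE Pp mA); exact: lexx.
  rewrite lee_fin.
  by have := HN mA; rewrite setIidl.
have pw : forall x, ((a%:E) <= (D x)%:E + (Num.max 0 (a - D x))%:E)%E.
  move=> x; rewrite -EFinD lee_fin.
  have : (a - D x <= Num.max 0 (a - D x))%R by rewrite le_max lexx orbT.
  lra.
have c3 : ((a * MR P)%:E <= \int[Mx]_(x in P) (D x)%:E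
                            + \int[Mx]_(x in P) (Num.max 0 (a - D x))%:E)%E.
  rewrite -ge0_integralD//; try exact: measurable_funTS.
  rewrite EFinM -MxR// -(integral_cst Mx mP).
  apply: ge0_le_integral => //; try (by move=> x _; rewrite lee_fin ltW);
    try (by move=> x _; exact: pw);
    by apply: emeasurable_funD; exact: measurable_funTS.
have c4 : ((a * fine (Pp N))%:E <= \int[Pp]_(x in N) (D x)%:E
                            + \int[Pp]_(x in N) (Num.max 0 (a - D x))%:E)%E.
  rewrite -ge0_integralD//; try exact: measurable_funTS.
  rewrite EFinM -probE// -(integral_cst Pp mN).
  apply: ge0_le_integral => //; try (by move=> x _; rewrite lee_fin ltW);
    try (by move=> x _; exact: pw);
    by apply: emeasurable_funD; exact: measurable_funTS.
apply: le_trans (_ : ((\int[Mx]_(x in P) (D x)%:E + \int[Mx]_(x in P) (Num.max 0 (a - D x))%:E)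
   + (\int[Pp]_(x in N) (D x)%:E + \int[Pp]_(x in N) (Num.max 0 (a - D x))%:E) <= _)%E).
  by rewrite mulrDr EFinD addeC; exact: leeD.
rewrite [X in (_ <= X)%E]addeACA.
by apply: leeD; apply: leeD.
Qed.

Definition Dstar (x : T) : R := (a * \1_N x)%R.

Lemma Dstar_meas : measurable_fun setT Dstar.
Proof. by apply: measurable_funM => //; exact: measurable_indic. Qed.

Lemma Dstar_range x : (0 <= Dstar x <= a)%R.
Proof.
rewrite /Dstar indicE; case: (x \in N); rewrite ?mulr1 ?mulr0 lexx ?ltW//.
Qed.

Lemma loss_Dstar : lossD Pp Pm Q a g Dstar = (a * (fine (Pp N) + MR P))%:E.
Proof.
have eh : (fun x => (Num.max 0 (a - Dstar x))%:E) = (fun x => (a * \1_P x)%:E).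
  apply/funext => x; congr (_%:E); rewrite /Dstar !indicE.
  have [Px|nPx] := pselect (P x).
  - have nNx : ~ N x by move=> Nx; have : (P `&` N) x by []; rewrite PIN.
    by rewrite (mem_set Px) (memNset nNx) mulr0 mulr1 subr0 max_r//; exact: ltW.
  - have : (P `|` N) x by rewrite PUN.
    case=> [Px|Nx]; first by case: nPx.
    by rewrite (mem_set Nx) (memNset nPx) mulr0 mulr1 subrr max_r.
have mh : measurable_fun setT (fun x => (a * \1_P x)%:E).
  by apply/measurable_EFinP; apply: measurable_funM => //; exact: measurable_indic.
rewrite /lossD -addeA eh -intMx//; last by move=> x; rewrite lee_fin mulr_ge0// ltW.
rewrite /Dstar (integralZl_indic measurableT (fun _ => N)) //; last by move=> /ltW; rewrite leNgt Ha.
rewrite (integralZl_indic measurableT (fun _ => P)) //; last by move=> /ltW; rewrite leNgt Ha.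
rewrite !integral_indic// !setIT mulrDr EFinD !EFinM -(MxR mP) -(probE Pp mN).
reflexivity.
Qed.

End HahnPart.
End Main.
Local Close Scope ereal_scope.

Theorem mainTheorem3 (d : measure_display) (T : measurableType d) (R : realType)
  (Pp Pm : probability T R) (a g : R)
  (Hsing : exists S : set T, [/\ measurable S, Pp S = 1%E & Pm S = 0%E])
  (Ha : 0 < a) (Hg0 : 0 < g) (Hg1 : g <= 1) :
  (forall Q : probability T R,
     ereal_inf [set lossD Pp Pm Q a g D | D in
                  [set D : T -> R | measurable_fun setT D /\ forall x, 0 <= D x]]
       = (a%:E - (a / 2)%:E * tv_norm Pp (mixture g Q Pm))%E
   /\ exists D : T -> R, [/\ measurable_fun setT D,
        (forall x, 0 <= D x <= a) &
        lossD Pp Pm Q a g D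
          = ereal_inf [set lossD Pp Pm Q a g D' | D' in
                  [set D' : T -> R | measurable_fun setT D' /\ forall x, 0 <= D' x]]])
  /\ (forall Q : probability T R,
        ((2 * (1 - g))%:E <= tv_norm Pp (mixture g Q Pm))%E)
  /\ tv_norm Pp (mixture g Pp Pm) = (2 * (1 - g))%:E.
Proof.
split; last split.
- move=> Q.
  have [P [N hPN]] := Hahn_decomposition (nuc Pp Pm Q g).
  have infE : ereal_inf [set lossD Pp Pm Q a g D | D in
                  [set D : T -> R | measurable_fun setT D /\ forall x, (0 <= D x)%R]]
              = (a * (fine (Pp N) + MR Pm Q g P))%:E.
    apply/le_anti/andP; split.
    + rewrite -(loss_Dstar Ha Hg0 Hg1 hPN).
      apply: ereal_inf_lbound; exists (Dstar a N); last by []. split.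
      * by apply: measurable_funM => //; apply/measurable_indic; case: hPN => _ [] .
      * by move=> x; have /andP[] := Dstar_range Ha N x.
    + apply: le_ereal_inf_tmp => _ [D [mD D0] <-].
      exact: (loss_lb Ha Hg0 Hg1 hPN mD D0).
  split.
  + rewrite infE (tv_formula hPN) -EFinM -EFinB; congr (_%:E).
    have pN : fine (Pp N) = (1 - fine (Pp P))%R by rewrite -(NC hPN) probC//; case: hPN => -[].
    by rewrite pN; field.
  + exists (Dstar a N); split.
    * by apply: measurable_funM => //; apply/measurable_indic; case: hPN => _ [] .
    * exact: Dstar_range.
    * by rewrite infE (loss_Dstar Ha Hg0 Hg1 hPN).
- move=> Q; exact: tv_part2.
- apply/le_anti/andP; split; first exact: tv_part3.
  exact: tv_part2.
Qed.
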